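(* Suppose $X$ is a polyhedron and let $\beta\in\mathcal{A}$. Let $P=-\mathcal{A}^TX+N_\beta^\circ$ (Minkowski sum). Then a vector $\nu\in N_\beta\setminus\{0\}$ is an $X$-circuit of $\mathcal{A}$ if and only if $\operatorname{cone}\{\nu\}=\{t\nu:t\ge0\}$ is a ray (one-dimensional cone) of the outer normal fan $\mathcal{O}(P)$. Consequently, when $X$ is polyhedral there are only finitely many normalized $X$-circuits of $\mathcal{A}$.
   Context: $X\subset\mathbb{R}^n$ is a nonempty closed convex set and $\mathcal{A}\subset\mathbb{R}^n$ is a nonempty finite set. $\mathbb{R}^{\mathcal{A}}$ denotes real vectors indexed by $\mathcal{A}$. $\mathcal{A}$ is viewed as the linear map $\mathbb{R}^{\mathcal{A}}\to\mathbb{R}^n$, $\mathcal{A}\nu=\sum_{\alpha\in\mathcal{A}}\alpha\nu_\alpha$, with adjoint $\mathcal{A}^T:\mathbb{R}^n\to\mathbb{R}^{\mathcal{A}}$, $(\mathcal{A}^Tx)_\alpha=\alpha^Tx$. The support function of a convex set $S$ is $\sigma_S(y)=\sup\{y^Tx:x\in S\}\in\mathbb{R}\cup\{+\infty\}$. For $\beta\in\mathcal{A}$, $N_\beta=\{\nu\in\mathbb{R}^{\mathcal{A}}:\nu_\alpha\ge0\ \forall\alpha\neq\beta,\ \sum_{\alpha}\nu_\alpha=0\}$, and $N_\beta^\circ=\{w:w^T\nu\le0\ \forall\nu\in N_\beta\}$ is its polar. A vector $\nu^\star\in N_\beta$ is an $X$-circuit of $\mathcal{A}$ if (1) $\nu^\star\neq0$,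 (2) $\sigma_X(-\mathcal{A}\nu^\star)<\infty$, and (3) $\nu^\star$ cannot be written as a convex combination of two non-proportional vectors $\nu^{(1)},\nu^{(2)}\in N_\beta$ such that the map $\nu\mapsto\sigma_X(-\mathcal{A}\nu)$ is affine on the segment $[\nu^{(1)},\nu^{(2)}]$. An $X$-circuit $\lambda\in N_\beta$ is normalized if $\lambda_\beta=-1$. For a polyhedron $P$ and a face $F$ of $P$, the outer normal cone is $\mathsf{N}_P(F)=\{w:z^Tw=\sigma_P(w)\ \forall z\in F\}$, and the outer normal fan is $\mathcal{O}(P)=\{\mathsf{N}_P(F):F\text{ a face of }P\}$. *)

(* Defs.v *)
From HB Require Import structures.
From mathcomp Require Import all_boot all_order all_algebra.
From mathcomp Require Import boolp classical_sets cardinality reals constructive_ereal ereal.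
Set Implicit Arguments. Unset Strict Implicit. Unset Printing Implicit Defensive.
Import Order.TTheory GRing.Theory Num.Theory.
Local Open Scope ring_scope.
Local Open Scope classical_set_scope.

Section Defs.
Variable R : realType.

Definition dotv (k : nat) (u v : 'rV[R]_k) : R := \sum_(i < k) u 0 i * v 0 i.

Definition supp_fun (k : nat) (S : set 'rV[R]_k) (y : 'rV[R]_k) : \bar R :=
  ereal_sup [set (dotv y x)%:E | x in S].

Definition is_polyhedron (k : nat) (S : set 'rV[R]_k) : Prop :=
  exists (p : nat) (C : 'I_p -> 'rV[R]_k) (d : 'I_p -> R),
    S = [set x | forall j, dotv (C j) x <= d j].

(* the finite set A = {a_0,...,a_(m-1)} (a injective) as the map R^A -> R^n *)
Definition Amap (n m : nat) (a : 'I_m -> 'rV[R]_n) (nu : 'rV[R]_m) : 'rV[R]_n :=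
  \sum_(i < m) nu 0 i *: a i.

Definition AmapT (n m : nat) (a : 'I_m -> 'rV[R]_n) (x : 'rV[R]_n) : 'rV[R]_m :=
  \row_(i < m) dotv (a i) x.

Definition Nbeta (m : nat) (beta : 'I_m) : set 'rV[R]_m :=
  [set nu | (forall i, i != beta -> 0 <= nu 0 i) /\ \sum_(i < m) nu 0 i = 0].

Definition polar (k : nat) (S : set 'rV[R]_k) : set 'rV[R]_k :=
  [set w | forall nu, S nu -> dotv w nu <= 0].

Definition proportional (k : nat) (u v : 'rV[R]_k) : Prop :=
  exists c : R, u = c *: v \/ v = c *: u.

Definition affine_on_segment (k : nat) (f : 'rV[R]_k -> \bar R) (u v : 'rV[R]_k) : Prop :=
  exists c d : R, forall t : R, 0 <= t <= 1 -> f (u + t *: (v - u)) = (c + t * d)%:E.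

Definition X_circuit (n m : nat) (X : set 'rV[R]_n) (a : 'I_m -> 'rV[R]_n)
    (beta : 'I_m) (nu : 'rV[R]_m) : Prop :=
  [/\ Nbeta beta nu,
      nu != 0,
      (supp_fun X (- Amap a nu) < +oo)%E &
      ~ (exists nu1 nu2 : 'rV[R]_m, exists lam : R,
           [/\ Nbeta beta nu1 /\ Nbeta beta nu2, ~ proportional nu1 nu2,
               0 < lam < 1,
               nu = lam *: nu1 + (1 - lam) *: nu2 &
               affine_on_segment (fun v => supp_fun X (- Amap a v)) nu1 nu2])].

Definition Pset (n m : nat) (X : set 'rV[R]_n) (a : 'I_m -> 'rV[R]_n) (beta : 'I_m)
  : set 'rV[R]_m :=
  [set - AmapT a x + w | x in X & w in polar (Nbeta beta)].

(* faces of a polyhedron (exposed faces; includes P itself and possibly the empty set) *)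
Definition is_face (k : nat) (P F : set 'rV[R]_k) : Prop :=
  exists w : 'rV[R]_k, F = [set z | P z /\ forall z', P z' -> dotv w z' <= dotv w z].

Definition normal_cone (k : nat) (P F : set 'rV[R]_k) : set 'rV[R]_k :=
  [set w | forall z, F z -> (dotv z w)%:E = supp_fun P w].

Definition outer_normal_fan (k : nat) (P : set 'rV[R]_k) : set (set 'rV[R]_k) :=
  [set N | exists F, is_face P F /\ N = normal_cone P F].

Definition cone1 (k : nat) (nu : 'rV[R]_k) : set 'rV[R]_k :=
  [set t *: nu | t in [set t : R | 0 <= t]].

End Defs.

(* Main.v *)
Require Import Defs.
From HB Require Import structures.
From mathcomp Require Import all_boot all_order all_algebra.
From mathcomp Require Import boolp classical_sets cardinality reals constructive_ereal ereal.
From mathcomp Require Import ring lra.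
Set Implicit Arguments. Unset Strict Implicit. Unset Printing Implicit Defensive.
Import Order.TTheory GRing.Theory Num.Theory.
Local Open Scope ring_scope.
Local Open Scope classical_set_scope.


Section Dot.
Context {R : realType}.

Lemma dotvC k (u v : 'rV[R]_k) : dotv u v = dotv v u.
Proof. by rewrite /dotv; apply: eq_bigr => i _; rewrite mulrC. Qed.

Lemma dotvDl k (u v w : 'rV[R]_k) : dotv (u + v) w = dotv u w + dotv v w.
Proof. by rewrite /dotv -big_split; apply: eq_bigr => i _; rewrite !mxE mulrDl. Qed.

Lemma dotvZl k s (u w : 'rV[R]_k) : dotv (s *: u) w = s * dotv u w.
Proof. by rewrite /dotv mulr_sumr; apply: eq_bigr => i _; rewrite !mxE mulrA. Qed.

Lemma dotv0l k (w : 'rV[R]_k) : dotv 0 w = 0.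
Proof. by rewrite /dotv big1 // => i _; rewrite mxE mul0r. Qed.

Lemma dotvNl k (u w : 'rV[R]_k) : dotv (- u) w = - dotv u w.
Proof. by rewrite -scaleN1r dotvZl mulN1r. Qed.

Lemma dotvBl k (u v w : 'rV[R]_k) : dotv (u - v) w = dotv u w - dotv v w.
Proof. by rewrite dotvDl dotvNl. Qed.

Lemma dotvDr k (u v w : 'rV[R]_k) : dotv w (u + v) = dotv w u + dotv w v.
Proof. by rewrite dotvC dotvDl !(dotvC w). Qed.

Lemma dotvZr k s (u w : 'rV[R]_k) : dotv w (s *: u) = s * dotv w u.
Proof. by rewrite dotvC dotvZl dotvC. Qed.

Lemma dotv0r k (w : 'rV[R]_k) : dotv w 0 = 0.
Proof. by rewrite dotvC dotv0l. Qed.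

Lemma dotvNr k (u w : 'rV[R]_k) : dotv w (- u) = - dotv w u.
Proof. by rewrite dotvC dotvNl dotvC. Qed.

Lemma dotvBr k (u v w : 'rV[R]_k) : dotv w (u - v) = dotv w u - dotv w v.
Proof. by rewrite dotvDr dotvNr. Qed.

Lemma dotv_suml k (I : finType) (F : I -> 'rV[R]_k) w :
  dotv (\sum_i F i) w = \sum_i dotv (F i) w.
Proof.
rewrite /dotv (exchange_big); apply: eq_bigr => j _.
by rewrite summxE mulr_suml.
Qed.

Definition vcons k (x : R) (z : 'rV[R]_k) : 'rV[R]_k.+1 :=
  \row_(j < k.+1) oapp (fun j' => z 0 j') x (unlift ord0 j).
Definition vtail k (u : 'rV[R]_k.+1) : 'rV[R]_k := \row_(j < k) u 0 (lift ord0 j).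

Lemma vcons_tail k (u : 'rV[R]_k.+1) : vcons (u 0 ord0) (vtail u) = u.
Proof.
apply/rowP => j; rewrite !mxE.
case: (unliftP ord0 j) => [j'|] -> /=; first by rewrite mxE.
by [].

Qed.

Lemma dotv_vcons k a x (g y : 'rV[R]_k) :
  dotv (vcons a g) (vcons x y) = a * x + dotv g y.
Proof.
rewrite /dotv big_ord_recl !mxE unlift_none /=; congr (_ + _).
by apply: eq_bigr => i _; rewrite !mxE liftK.
Qed.

Lemma vcons00 k : vcons 0 (0 : 'rV[R]_k) = 0.
Proof. by apply/rowP => j; rewrite !mxE; case: (unlift ord0 j) => //= j'; rewrite mxE. Qed.

Lemma vcons_sum k (J : finType) (mu : J -> R) (H : J -> 'rV[R]_k) :
  \sum_j mu j *: vcons 0 (H j) = vcons 0 (\sum_j mu j *: H j).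
Proof.
apply/rowP => i; rewrite summxE [RHS]mxE.
case: (unliftP ord0 i) => [j'|] -> /=.
  rewrite summxE; apply: eq_bigr => j _; rewrite !mxE liftK //.
rewrite big1 // => j _; rewrite !mxE unlift_none /= mulr0 //.
Qed.

Definition derivable k (I : finType) (G : I -> 'rV[R]_k) (b : I -> R)
  (h : 'rV[R]_k) (c : R) :=
  exists lam : I -> R, (forall i, 0 <= lam i) /\
    h = \sum_i lam i *: G i /\ c = \sum_i lam i * b i.

Section DerivLemmas.
Variables (k : nat) (I : finType) (G : I -> 'rV[R]_k) (b : I -> R).

Lemma der0 : derivable G b 0 0.
Proof.
exists (fun=> 0); split => //; split; first by rewrite big1 // => i _; rewrite scale0r.
by rewrite big1 // => i _; rewrite mul0r.
Qed.

Lemma derD h c h' c' : derivable G b h c -> derivable G b h' c' ->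
  derivable G b (h + h') (c + c').
Proof.
move=> [l [l0 [-> ->]]] [l' [l'0 [-> ->]]].
exists (fun i => l i + l' i); split; first by move=> i; rewrite addr_ge0.
split; rewrite -big_split; apply: eq_bigr => i _; first by rewrite scalerDl.
by rewrite mulrDl.
Qed.

Lemma derZ s h c : 0 <= s -> derivable G b h c -> derivable G b (s *: h) (s * c).
Proof.
move=> s0 [l [l0 [-> ->]]].
exists (fun i => s * l i); split; first by move=> i; rewrite mulr_ge0.
split; first by rewrite scaler_sumr; apply: eq_bigr => i _; rewrite scalerA.
by rewrite mulr_sumr; apply: eq_bigr => i _; rewrite mulrA.
Qed.

Lemma der_row i : derivable G b (G i) (b i).
Proof.
exists (fun j => (j == i)%:R); split; first by move=> j; rewrite ler0n.
split.
  rewrite (bigD1 i) //= eqxx scale1r big1 ?addr0 // => j /negbTE ->.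
  by rewrite scale0r.
rewrite (bigD1 i) //= eqxx mul1r big1 ?addr0 // => j /negbTE ->.
by rewrite mul0r.
Qed.

Lemma der_comb (J : finType) (mu : J -> R) (H : J -> 'rV[R]_k) (e : J -> R) :
  (forall j, 0 <= mu j) -> (forall j, derivable G b (H j) (e j)) ->
  derivable G b (\sum_j mu j *: H j) (\sum_j mu j * e j).
Proof.
move=> mu0 He.
apply: (big_rec2 (fun x y => derivable G b x y)); first exact: der0.
by move=> j y1 y2 _ Hy; apply: derD => //; apply: derZ.
Qed.

Lemma der_slack h c : derivable G b h c ->
  exists lam : I -> R, (forall i, 0 <= lam i) /\
    forall y, c - dotv h y = \sum_i lam i * (b i - dotv (G i) y).
Proof.
move=> [l [l0 [-> ->]]]; exists l; split => // y.
rewrite dotv_suml -sumrB; apply: eq_bigr => i _.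
by rewrite dotvZl mulrBr.
Qed.

End DerivLemmas.

Lemma between (I : finType) (P Q : pred I) (lo up : I -> R) :
  (forall p q, P p -> Q q -> lo q <= up p) ->
  exists y0, (forall q, Q q -> lo q <= y0) /\ (forall p, P p -> y0 <= up p).
Proof.
move=> H.
pose M := \sum_(p | P p) `|up p|.
exists (\big[Num.max/(- M)]_(q | Q q) lo q); split.
  by move=> q Qq; rewrite (bigD1 q) //= le_max lexx.
move=> p Pp; apply: (big_rec (fun y => y <= up p)).
  apply: lerNnormlW; rewrite /M (bigD1 p) //= lerDl sumr_ge0 // => i _.
move=> q y Qq Hy; rewrite ge_max Hy andbT; exact: H.
Qed.

Lemma FK k : forall (I : finType) (G : I -> 'rV[R]_k) (b : I -> R),
  ~ (exists y, forall i, dotv (G i) y <= b i) ->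
  exists2 c, c < 0 & derivable G b 0 c.
Proof.
elim: k => [|k IH] I G b Hinf.
  case: (pselect (exists i, b i < 0)) => [[i bi]|Hn].
    exists (b i) => //.
    have -> : (0 : 'rV[R]_0) = G i by apply/rowP => -[].
    exact: der_row.
  exfalso; apply: Hinf; exists 0 => i; rewrite /dotv big_ord0.
  by rewrite leNgt; apply/negP => hb; apply: Hn; exists i.
pose a := fun i => G i 0 ord0.
pose g := fun i => vtail (G i).
pose G' := fun j : (I + (I * I))%type => match j with
  | inl i => if a i == 0 then g i else 0
  | inr pq => if (0 < a pq.1) && (a pq.2 < 0)
              then (- a pq.2) *: g pq.1 + a pq.1 *: g pq.2 else 0 end.
pose b' := fun j : (I + (I * I))%type => match j with
  | inl i => if a i == 0 then b i else 0
  | inr pq => if (0 < a pq.1) && (a pq.2 < 0)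
              then (- a pq.2) * b pq.1 + a pq.1 * b pq.2 else 0 end.
have GE i : G i = vcons (a i) (g i) by rewrite vcons_tail.
have Hinf' : ~ (exists z, forall j, dotv (G' j) z <= b' j).
  move=> [z Hz].
  case: (@between I (fun p => 0 < a p) (fun q => a q < 0)
    (fun q => (b q - dotv (g q) z) / a q) (fun p => (b p - dotv (g p) z) / a p))
    => [p q /= ap aq|y0 [Hlo Hup]].
    have := Hz (inr (p, q)).
    rewrite /G' /b' /= ap aq /= dotvDl !dotvZl => h.
    rewrite ler_pdivlMr // mulrAC ler_ndivrMr //; nra.
  apply: Hinf; exists (vcons y0 z) => i.
  rewrite GE dotv_vcons.
  case: (ltrgtP (a i) 0) => ai.
  - have := Hlo i ai; rewrite /= ler_ndivrMr // => h; nra.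
  - have := Hup i ai; rewrite /= ler_pdivlMr // => h; nra.
  - have := Hz (inl i); rewrite /G' /b' /= ai eqxx mul0r add0r //.
have [c c0 [mu [mu0 [H0 Hc]]]] := IH _ G' b' Hinf'.
exists c => //.
have -> : (0 : 'rV[R]_k.+1) = \sum_j mu j *: vcons 0 (G' j)
  by rewrite vcons_sum -H0 vcons00.
rewrite Hc; apply: der_comb => // -[i|[p q]] /=.
  case: eqP => [ai|_]; last by rewrite vcons00; exact: der0.
  by rewrite -ai -GE; exact: der_row.
case: ifP => [/andP[ap aq]|_]; last by rewrite vcons00; exact: der0.
have -> : vcons 0 ((- a q) *: g p + a p *: g q) = (- a q) *: G p + a p *: G q.
  apply/rowP => j; rewrite !mxE; case: (unliftP ord0 j) => [j'|] -> /=.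
    by rewrite !mxE.
  rewrite /a; ring.
apply: derD; apply: derZ; rewrite ?oppr_ge0 ?ltW //; exact: der_row.
Qed.

Lemma FK_slack (I : finType) (k : nat) (G : I -> 'rV[R]_k) (b : I -> R) :
  ~ (exists y, forall i, dotv (G i) y <= b i) ->
  exists lam : I -> R, (forall i, 0 <= lam i) /\ exists2 c, c < 0 &
    forall y, c = \sum_i lam i * (b i - dotv (G i) y).
Proof.
move=> /FK [c c0 /der_slack [lam [l0 H]]].
exists lam; split => //; exists c => // y.
by rewrite -H dotv0l subr0.
Qed.

End Dot.


Section LP.
Context {R : realType}.

Lemma small_common (I : finType) (Q : I -> R -> Prop) :
  (forall i, exists2 del, 0 < del & forall t, 0 < t <= del -> Q i t) ->
  exists2 del, 0 < del & forall i t, 0 < t <= del -> Q i t.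
Proof.
move=> H.
suff: forall s : seq I, exists2 del, 0 < del &
    forall i t, i \in s -> 0 < t <= del -> Q i t.
  by case/(_ (enum I)) => del d0 Hd; exists del => // i t; apply: Hd; rewrite mem_enum.
elim=> [|i s [del d0 Hd]]; first by exists 1.
have [del' d0' Hd'] := H i.
exists (Num.min del del'); first by rewrite lt_min d0 d0'.
move=> j t; rewrite inE => /orP[/eqP ->|js] /andP[t0]; rewrite le_min => /andP[t1 t2].
  by apply: Hd'; rewrite t0.
by apply: Hd => //; rewrite t0.
Qed.

Variables (n p : nat) (C : 'I_p -> 'rV[R]_n) (d : 'I_p -> R).

Definition inX (x : 'rV[R]_n) := forall j, dotv (C j) x <= d j.

Lemma step_in x0 y : inX x0 ->
  (forall j, dotv (C j) x0 = d j -> dotv (C j) y <= 0) ->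
  exists2 t, 0 < t & inX (x0 + t *: y).
Proof.
move=> hx hy.
case: (@small_common _ (fun j t => dotv (C j) (x0 + t *: y) <= d j)) => [j|del d0 Hd]; last first.
  by exists del => //; move=> j; apply: Hd; rewrite d0 lexx.
case: (eqVneq (dotv (C j) x0) (d j)) => [e|ne].
  exists 1 => // t /andP[t0 _]; rewrite dotvDr dotvZr e.
  have := hy j e; nra.
have lt : dotv (C j) x0 < d j by rewrite lt_neqAle ne hx.
have n0 : 0 < `|dotv (C j) y| + 1 by rewrite ltr_wpDl.
exists ((d j - dotv (C j) x0) / (`|dotv (C j) y| + 1)).
  by rewrite divr_gt0 // subr_gt0.
move=> t /andP[t0]; rewrite ler_pdivlMr // dotvDr dotvZr => h.
have := ler_norm (dotv (C j) y); have := normr_ge0 (dotv (C j) y); nra.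
Qed.

Lemma attain c M : (exists x, inX x) -> (forall x, inX x -> dotv c x <= M) ->
  exists2 x0, inX x0 & forall x, inX x -> dotv c x <= dotv c x0.
Proof.
move=> [x1 hx1] hM.
pose E := [set dotv c x | x in inX].
have hs : has_sup E.
  split; first by exists (dotv c x1), x1.
  by exists M => _ [x hx <-]; apply: hM.
case: (pselect (exists x0, inX x0 /\ sup E <= dotv c x0)) => [[x0 [h1 h2]]|Hn].
  exists x0 => // x hx; apply: le_trans h2.
  by apply: sup_upper_bound => //; exists x.
exfalso.
pose G := fun i : ('I_p + 'I_1)%type => match i with inl j => C j | inr _ => - c end.
pose b := fun i : ('I_p + 'I_1)%type => match i with inl j => d j | inr _ => - sup E end.
case: (@FK_slack _ _ _ G b) => [[y hy]|lam [l0 [k k0 Hk]]].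
  apply: Hn; exists y; split.
    by move=> j; apply: (hy (inl j)).
  by have := hy (inr ord0); rewrite /= dotvNl lerN2.
have key x : inX x -> lam (inr ord0) * (dotv c x - sup E) <= k.
  move=> hx; rewrite (Hk x) big_sumType big_ord1 /= dotvNl.
  have : 0 <= \sum_j lam (inl j) * (d j - dotv (C j) x).
    by rewrite sumr_ge0 // => j _; rewrite mulr_ge0 // subr_ge0; exact: hx.
  lra.
set th := lam (inr ord0) in key.
have th0 : 0 < th.
  have := key _ hx1; have := l0 (inr ord0); rewrite -/th => t0 h.
  rewrite lt_neqAle t0 andbT; apply/eqP => t00; rewrite -t00 mul0r in h; lra.
have : 0 < - k / th by rewrite divr_gt0 // oppr_gt0.
move/(@sup_adherent _ E)/(_ hs) => [e [x hx <-] he].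
have := key x hx; rewrite mulrC -ler_pdivlMr //; lra.
Qed.

Lemma KKT c x0 : inX x0 -> (forall x, inX x -> dotv c x <= dotv c x0) ->
  exists lam : 'I_p -> R, [/\ forall j, 0 <= lam j,
    forall j, 0 < lam j -> dotv (C j) x0 = d j &
    forall y, dotv c y = \sum_j lam j * dotv (C j) y].
Proof.
move=> hx0 hmax.
pose act := fun j => dotv (C j) x0 == d j.
pose G := fun i : ('I_p + 'I_1)%type => match i with
  inl j => if act j then C j else 0 | inr _ => - c end.
pose b := fun i : ('I_p + 'I_1)%type => match i with inl j => 0 | inr _ => - 1 end : R.
case: (@FK_slack _ _ _ G b) => [[y hy]|lam [l0 [k k0 Hk]]].
  case: (@step_in x0 y hx0) => [j e|t t0 ht].
    by have := hy (inl j); rewrite /= /act e eqxx.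
  have := hmax _ ht; have := hy (inr ord0).
  rewrite /= dotvNl lerN2 dotvDr dotvZr; nra.
set th := lam (inr ord0) in Hk.
have Hk0 : k = - th.
  rewrite (Hk 0) big_sumType big_ord1 /= big1 => [|j _]; last by rewrite dotv0r subr0 mulr0.
  by rewrite dotv0r add0r subr0 mulrN1.
have th0 : 0 < th by rewrite -/th; lra.
exists (fun j => if act j then lam (inl j) / th else 0); split.
- by move=> j; case: ifP => // _; rewrite divr_ge0 // ltW.
- by move=> j; case: ifP => [/eqP //|_]; rewrite ltxx.
move=> y; have := Hk y; rewrite big_sumType big_ord1 /= dotvNl Hk0.
have -> : \sum_j lam (inl j) * (0 - dotv (G (inl j)) y) =
          - (th * \sum_j (if act j then lam (inl j) / th else 0) * dotv (C j) y).
  rewrite mulr_sumr -sumrN; apply: eq_bigr => j _ /=.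
  case: ifP => _; last by rewrite dotv0l subr0 mulr0 mul0r mulr0 oppr0.
  by field; rewrite gt_eqF.
move=> h.
have : th * dotv c y = th * (\sum_j (if act j then lam (inl j) / th else 0) * dotv (C j) y) by rewrite -/th in h; lra.
by move/(mulfI (negbT (gt_eqF th0))).
Qed.

Lemma lemL c1 c2 x0 : inX x0 ->
  (forall x, inX x -> dotv c1 x <= dotv c1 x0) ->
  (forall x, inX x -> dotv c2 x <= dotv c2 x0) ->
  (forall x, inX x -> dotv c1 x = dotv c1 x0 -> dotv c2 x0 <= dotv c2 x) ->
  exists2 eps, 0 < eps & forall e, 0 < e <= eps ->
    forall x, inX x -> dotv (c1 - e *: c2) x <= dotv (c1 - e *: c2) x0.
Proof.
move=> hx0 m1 m2 h12.
pose act := fun j => dotv (C j) x0 == d j.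
pose G := fun i : ('I_p + bool)%type => match i with
  inl j => if act j then C j else 0 | inr true => c2 | inr false => - c1 end.
pose b := fun i : ('I_p + bool)%type => match i with
  inl j => 0 | inr true => - 1 | inr false => 0 end : R.
case: (@FK_slack _ _ _ G b) => [[y hy]|lam [l0 [k k0 Hk]]].
  case: (@step_in x0 y hx0) => [j e|t t0 ht].
    by have := hy (inl j); rewrite /= /act e eqxx.
  have := hy (inr true); have := hy (inr false); rewrite /= dotvNl oppr_le0 => h1 h2.
  have := m1 _ ht; rewrite dotvDr dotvZr => h3.
  have e1 : dotv c1 (x0 + t *: y) = dotv c1 x0 by rewrite dotvDr dotvZr; nra.
  have := h12 _ ht e1; rewrite dotvDr dotvZr; nra.
set t2 := lam (inr true) in Hk; set t1 := lam (inr false) in Hk.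
have Hk0 : k = - t2.
  rewrite (Hk 0) big_sumType big_bool /= big1 => [|j _]; last by rewrite dotv0r subr0 mulr0.
  by rewrite !dotv0r !subr0 mulr0 add0r addr0 mulrN1.
have t20 : 0 < t2 by rewrite -/t2; lra.
have t10 : 0 <= t1 by exact: l0.
have key x : inX x -> t1 * dotv c1 (x - x0) <= t2 * dotv c2 (x - x0).
  move=> hx; have := Hk (x - x0); rewrite big_sumType big_bool /= dotvNl.
  have : 0 <= \sum_(j < p) lam (inl j) * (0 - dotv (if act j then C j else 0) (x - x0)).
    apply: sumr_ge0 => j _; apply: mulr_ge0 => //=.
    case: ifP => [/eqP e|_]; last by rewrite dotv0l subr0.
    by rewrite dotvBr e sub0r oppr_ge0 subr_le0; exact: hx.
  move=> h; rewrite Hk0 => h2; rewrite -/t1 -/t2 in h2; lra.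
case: (eqVneq t1 0) => [t1e|t1n].
  exists 1 => // e /andP[e0 _] x hx.
  have := key x hx; rewrite t1e mul0r dotvBr => h.
  have : dotv c2 x0 <= dotv c2 x by move: h; rewrite pmulr_rge0 // subr_ge0.
  have := m1 x hx; rewrite !dotvBl !dotvZl; nra.
have t1p : 0 < t1 by rewrite lt_neqAle eq_sym t1n t10.
exists (t2 / t1); first by rewrite divr_gt0.
move=> e /andP[e0 e1] x hx.
move: e1; rewrite ler_pdivlMr // => e1.
have := key x hx; have := m1 x hx; rewrite !dotvBr !dotvBl !dotvZl.
move=> h1 h2.
have h1' : dotv c1 x - dotv c1 x0 <= 0 by rewrite subr_le0.
have e1' : 0 <= t2 - e * t1 by rewrite subr_ge0.
have s1 := mulr_ge0_le0 e1' h1'.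
have s2 := ler_wpM2l (ltW e0) h2.
have : t2 * ((dotv c1 x - dotv c1 x0) - e * (dotv c2 x - dotv c2 x0)) <= 0 by nra.
by rewrite pmulr_rle0 // => h; lra.
Qed.

End LP.


Section Sup.
Context {R : realType}.

Lemma sf_ub k (S : set 'rV[R]_k) u z : S z -> ((dotv u z)%:E <= supp_fun S u)%E.
Proof. by move=> hz; apply: ereal_sup_ubound; exists z. Qed.

Lemma sf_max k (S : set 'rV[R]_k) u z : S z ->
  (forall z', S z' -> dotv u z' <= dotv u z) -> supp_fun S u = (dotv u z)%:E.
Proof.
move=> hz hm; apply/eqP; rewrite eq_le sf_ub // andbT.
by apply: ge_ereal_sup => _ [z' hz' <-]; rewrite lee_fin; exact: hm.
Qed.

Lemma sf_bound k (S : set 'rV[R]_k) u z1 : S z1 -> (supp_fun S u < +oo)%E ->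
  exists M, forall z, S z -> dotv u z <= M.
Proof.
move=> h1; case E: (supp_fun S u) => [r| |] // _.
  by exists r => z hz; have := sf_ub u hz; rewrite E lee_fin.
by have := sf_ub u h1; rewrite E leeNy_eq.
Qed.

Definition ev k (i : 'I_k) : 'rV[R]_k := \row_j (j == i)%:R.

Lemma dotv_evr k (u : 'rV[R]_k) i : dotv u (ev i) = u 0 i.
Proof.
rewrite /dotv (bigD1 i) //= !mxE eqxx mulr1 big1 ?addr0 // => j /negbTE ji.
by rewrite !mxE ji mulr0.
Qed.

Lemma dotv_evl k (u : 'rV[R]_k) i : dotv (ev i) u = u 0 i.
Proof. by rewrite dotvC dotv_evr. Qed.

Lemma sum_ev k (i : 'I_k) : \sum_j ev i 0 j = 1.
Proof.
rewrite (bigD1 i) //= mxE eqxx big1 ?addr0 // => j /negbTE ji.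
by rewrite mxE ji.
Qed.

Lemma sum_rowB k (u v : 'rV[R]_k) e :
  \sum_i (u - e *: v) 0 i = \sum_i u 0 i - e * \sum_i v 0 i.
Proof. by rewrite mulr_sumr -sumrB; apply: eq_bigr => i _; rewrite !mxE. Qed.

Lemma sum_rowD k (u v : 'rV[R]_k) e :
  \sum_i (u + e *: v) 0 i = \sum_i u 0 i + e * \sum_i v 0 i.
Proof. by rewrite mulr_sumr -big_split; apply: eq_bigr => i _; rewrite !mxE. Qed.

Section Nb.
Variables (m : nat) (beta : 'I_m).
Local Notation NB := (@Nbeta R m beta).
Local Notation PB := (@polar R m NB).

Lemma Nb_comb u v s t : NB u -> NB v -> 0 <= s -> 0 <= t ->
  NB (s *: u + t *: v).
Proof.
move=> [u1 u2] [v1 v2] s0 t0; split.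
  by move=> i ib; rewrite !mxE addr_ge0 // mulr_ge0 //; [exact: u1|exact: v1].
rewrite (eq_bigr (fun i => s * u 0 i + t * v 0 i)) => [|i _]; last by rewrite !mxE.
rewrite big_split -!mulr_sumr u2 v2 /= !mulr0 addr0 //.
Qed.

Lemma Nb_scale u t : NB u -> 0 <= t -> NB (t *: u).
Proof.
move=> hu t0; have := Nb_comb hu hu t0 (lexx 0).
by rewrite scale0r addr0.
Qed.

Lemma Nb_add u v : NB u -> NB v -> NB (u + v).
Proof. by move=> hu hv; have := Nb_comb hu hv ler01 ler01; rewrite !scale1r. Qed.

Lemma Nb_pointed u : NB u -> NB (- u) -> u = 0.
Proof.
move=> [u1 u2] [v1 _].
have hz i : i != beta -> u 0 i = 0.
  move=> ib; apply/eqP; rewrite eq_le u1 // andbT.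
  by have := v1 i ib; rewrite !mxE oppr_ge0.
apply/rowP => i; rewrite mxE.
case: (eqVneq i beta) => [->|ib]; last exact: hz.
move: u2; rewrite (bigD1 beta) //= big1 ?addr0 //.
Qed.

Lemma polar0 : PB 0.
Proof. by move=> nu _; rewrite dotv0l. Qed.

Lemma polarD y y' : PB y -> PB y' ->
  PB (y + y').
Proof. by move=> h h' nu hn; rewrite dotvDl; have := h nu hn; have := h' nu hn; lra. Qed.

Lemma polar_nev i : i != beta -> PB (- ev i).
Proof. by move=> ib nu [hn _]; rewrite dotvNl dotv_evl oppr_le0; exact: hn. Qed.

Definition ones : 'rV[R]_m := \row_j 1.

Lemma polar_ones s : PB (s *: ones).
Proof.
move=> nu [_ hs]; rewrite dotvZl /dotv.
rewrite (eq_bigr (fun i => nu 0 i)) ?hs ?mulr0 // => i _.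
by rewrite mxE mul1r.
Qed.

Lemma N3 w : ~ NB w -> exists2 y, PB y & 0 < dotv y w.
Proof.
move=> hw.
case: (pselect (exists2 i, i != beta & w 0 i < 0)) => [[i ib wi]|Hn].
  exists (- ev i); first exact: polar_nev.
  by rewrite dotvNl dotv_evl oppr_gt0.
have hs : \sum_i w 0 i != 0.
  apply/negP => /eqP hs; apply: hw; split => // i ib.
  by rewrite leNgt; apply/negP => wi; apply: Hn; exists i.
exists ((\sum_i w 0 i) *: ones); first exact: polar_ones.
rewrite dotvZl; have -> : dotv ones w = \sum_i w 0 i.
  by apply: eq_bigr => i _; rewrite mxE mul1r.
by rewrite -expr2 lt_neqAle sqr_ge0 andbT eq_sym sqrf_eq0.
Qed.

Lemma polar_le y i : PB y -> i != beta -> y 0 i <= y 0 beta.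
Proof.
move=> hy ib.
have : NB (ev i - ev beta).
  split.
    move=> j jb; rewrite !mxE (negbTE jb) subr0 ler0n //.
  rewrite (eq_bigr (fun j => ev i 0 j - ev beta 0 j)) => [|j _]; last by rewrite !mxE.
  by rewrite sumrB !sum_ev subrr.
move/hy; rewrite dotvBr !dotv_evr subr_le0 //.
Qed.

Lemma dot_decomp (y v : 'rV[R]_m) : \sum_i v 0 i = 0 ->
  dotv y v = \sum_i v 0 i * (y 0 i - y 0 beta).
Proof.
move=> hs; rewrite /dotv.
have -> : \sum_i v 0 i * (y 0 i - y 0 beta) =
          \sum_i y 0 i * v 0 i - y 0 beta * \sum_i v 0 i.
  by rewrite mulr_sumr -sumrB; apply: eq_bigr => i _; ring.
by rewrite hs mulr0 subr0.
Qed.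

Lemma zero_pattern (y v v' : 'rV[R]_m) : PB y -> NB v ->
  \sum_i v' 0 i = 0 -> (forall i, v 0 i = 0 -> v' 0 i = 0) ->
  dotv y v = 0 -> dotv y v' = 0.
Proof.
move=> hy [v1 v2] s' hz hyv.
rewrite (dot_decomp y s'); apply: big1 => i _.
case: (eqVneq i beta) => [->|ib]; first by rewrite subrr mulr0.
have : - (v 0 i * (y 0 i - y 0 beta)) = 0.
  move: hyv; rewrite (dot_decomp y v2) => hyv.
  apply: (@psumr_eq0P _ _ predT (fun i => - (v 0 i * (y 0 i - y 0 beta)))) => //.
    move=> j _; case: (eqVneq j beta) => [->|jb]; first by rewrite subrr mulr0 oppr0.
    by rewrite oppr_ge0 mulr_ge0_le0 ?v1 // subr_le0 polar_le.
  by rewrite sumrN hyv oppr0.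
move/eqP; rewrite oppr_eq0 mulf_eq0 => /orP[/eqP v0|]; first by rewrite hz // mul0r.
by rewrite subr_eq0 => /eqP ->; rewrite subrr mulr0.
Qed.

End Nb.
End Sup.


Section Main.
Context {R : realType}.
Variables (n m p : nat) (a : 'I_m -> 'rV[R]_n) (X : set 'rV[R]_n) (beta : 'I_m)
  (C : 'I_p -> 'rV[R]_n) (d : 'I_p -> R).
Hypothesis HX : X = [set x | forall j, dotv (C j) x <= d j].
Hypothesis hX0 : X !=set0.
Local Notation NB := (@Nbeta R m beta).
Local Notation PB := (@polar R m NB).
Local Notation P := (Pset X a beta).

Definition cf (w : 'rV[R]_m) : 'rV[R]_n := - Amap a w.

Lemma XE x : X x <-> inX C d x.
Proof. by rewrite HX. Qed.

Lemma cf_lin u v e : cf (u + e *: v) = cf u + e *: cf v.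
Proof.
rewrite /cf /Amap scalerN -opprD; congr (- _).
rewrite scaler_sumr -big_split; apply: eq_bigr => i _.
by rewrite !mxE scalerDl scalerA.
Qed.

Lemma cf_linB u v e : cf (u - e *: v) = cf u - e *: cf v.
Proof. by rewrite -scaleNr cf_lin scaleNr. Qed.

Lemma dotAT x w : dotv w (- AmapT a x) = dotv (cf w) x.
Proof.
rewrite dotvNr /cf dotvNl /Amap dotv_suml; congr (- _).
by apply: eq_bigr => i _; rewrite dotvZl !mxE mulrC.
Qed.

Lemma Pmem x y : X x -> PB y -> P (- AmapT a x + y).
Proof. by move=> hx hy; exists x => //; exists y. Qed.

Lemma Pmem0 x : X x -> P (- AmapT a x).
Proof. by move=> hx; rewrite -[X in P X]addr0; apply: Pmem => //; exact: polar0. Qed.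

Lemma Pinv z : P z -> exists x y, [/\ X x, PB y & z = - AmapT a x + y].
Proof. by case=> x hx [y hy <-]; exists x, y. Qed.

Lemma dotP w x y : dotv w (- AmapT a x + y) = dotv (cf w) x + dotv w y.
Proof. by rewrite dotvDr dotAT. Qed.

Lemma SP w : NB w -> supp_fun P w = supp_fun X (cf w).
Proof.
move=> hw; apply/eqP; rewrite eq_le; apply/andP; split.
  apply: ge_ereal_sup => _ [z /Pinv [x [y [hx hy ->]]] <-].
  apply: le_trans (sf_ub _ hx); rewrite lee_fin dotP.
  by have := hy w hw; rewrite dotvC; lra.
apply: ge_ereal_sup => _ [x hx <-].
by apply: le_trans (sf_ub w (Pmem0 hx)); rewrite dotAT.
Qed.

Definition Fc (nu : 'rV[R]_m) :=
  [set z | P z /\ forall z', P z' -> dotv nu z' <= dotv nu z].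

Lemma prop_helper (nu w : 'rV[R]_m) (r s : R) :
  (forall i, r * nu 0 i = s * w 0 i) -> s != 0 -> w = (r / s) *: nu.
Proof.
move=> h s0; apply/rowP => i; rewrite mxE.
by rewrite mulrAC h [s * _]mulrC mulfK.
Qed.

Lemma circ_cone nu : X_circuit X a beta nu -> normal_cone P (Fc nu) = cone1 nu.
Proof.
case=> Nn n0 fin nodec.
have [x1 hx1] := hX0.
have [M hM] := sf_bound hx1 fin.
have [x0 hx0 m1] := attain (ex_intro _ x1 ((XE x1).1 hx1))
   (fun x hx => hM x ((XE x).2 hx)).
have hx0' : X x0 by exact/XE.
set z0 := - AmapT a x0.
have Pz0 : P z0 by exact: Pmem0.
have dz0 w : dotv w z0 = dotv (cf w) x0 by rewrite dotAT.
have mnu : forall z', P z' -> dotv nu z' <= dotv nu z0.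
  move=> z' /Pinv [x [y [hx hy ->]]]; rewrite dotP dz0.
  have := hy nu Nn; have := m1 x ((XE x).1 hx); rewrite /cf (dotvC nu y); lra.
have Fz0 : Fc nu z0 by split.
apply/seteqP; split => w; last first.
  move=> [t t0 <-] z [Pz hz].
  have mx : forall z', P z' -> dotv (t *: nu) z' <= dotv (t *: nu) z.
    by move=> z' hz'; rewrite !dotvZl ler_wpM2l // hz.
  by rewrite (sf_max Pz mx) dotvC.
move=> hw.
have hw0 := hw z0 Fz0.
have wmax : forall z', P z' -> dotv w z' <= dotv w z0.
  by move=> z' hz'; have := sf_ub w hz'; rewrite -hw0 lee_fin (dotvC z0).
have wF : forall z, Fc nu z -> dotv w z = dotv w z0.
  move=> z hz; have := hw z hz; rewrite -hw0; case.
  by rewrite dotvC (dotvC z0).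
have Nw : NB w.
  apply: contrapT => /(@N3 R m beta) [y hy hyw].
  have := wmax _ (Pmem hx0' hy); rewrite dotvDr -/z0 (dotvC w y); lra.
have supp : forall i, i != beta -> nu 0 i = 0 -> w 0 i = 0.
  move=> i ib ni; have hy := polar_nev ib.
  have Fz : Fc nu (z0 + - ev i).
    split; first exact: Pmem.
    by move=> z' hz'; rewrite dotvDr dotvNr dotv_evr ni oppr0 addr0; exact: mnu.
  have := wF _ Fz; rewrite dotvDr dotvNr dotv_evr; lra.
have m2 : forall x, inX C d x -> dotv (cf w) x <= dotv (cf w) x0.
  by move=> x hx; rewrite -dz0 -dotAT; apply: wmax; apply: Pmem0; exact/XE.
have h12 : forall x, inX C d x -> dotv (cf nu) x = dotv (cf nu) x0 ->
    dotv (cf w) x0 <= dotv (cf w) x.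
  move=> x hx e; have Fx : Fc nu (- AmapT a x).
    split; first by apply: Pmem0; exact/XE.
    by move=> z' hz'; rewrite dotAT e -dz0; exact: mnu.
  by have := wF _ Fx; rewrite dotAT dz0 => ->.
have [eL eL0 HL] := lemL hx0 m1 m2 h12.
case: (@small_common R _ (fun i t => i != beta -> 0 <= nu 0 i - t * w 0 i))
  => [i|del del0 Hdel].
  case: (eqVneq i beta) => [->|ib]; first by exists 1 => // t _; rewrite eqxx.
  case: (eqVneq (nu 0 i) 0) => [ni|ni].
    by exists 1 => // t _ _; rewrite ni (supp i ib ni) mulr0 subr0.
  have np : 0 < nu 0 i by rewrite lt_neqAle eq_sym ni; exact: Nn.1.
  have wp : 0 <= w 0 i by exact: Nw.1.
  exists (nu 0 i / (w 0 i + 1)); first by rewrite divr_gt0 // ltr_wpDl.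
  move=> t /andP[t0]; rewrite ler_pdivlMr ?ltr_wpDl // => ht _; nra.
set e := Num.min eL del.
have e0 : 0 < e by rewrite lt_min eL0 del0.
have eeL : e <= eL by rewrite ge_min lexx.
have edel : e <= del by rewrite ge_min lexx orbT.
apply: contrapT => hcone.
have noprop : forall k, w = k *: nu -> False.
  move=> k wk; case: (lerP 0 k) => k0; first by apply: hcone; exists k.
  have : NB (- nu).
    have -> : - nu = (- k^-1) *: w.
      by rewrite wk scalerA mulNr mulVf ?lt_eqF // scaleN1r.
    by apply: Nb_scale Nw _; rewrite oppr_ge0 invr_le0 ltW.
  by move/(Nb_pointed Nn) => nu0; move: n0; rewrite nu0 eqxx.
have nuz : (forall i, nu 0 i = 0) -> False.
  move=> h; move: n0; have -> : nu = 0 by apply/rowP => i; rewrite h mxE.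
  by rewrite eqxx.
set nu1 := nu + e *: w; set nu2 := nu - e *: w.
have N1 : NB nu1 by apply: Nb_add Nn (Nb_scale Nw (ltW e0)).
have N2 : NB nu2.
  split; last by rewrite sum_rowB Nn.2 Nw.2 mulr0 subr0.
  move=> i ib; rewrite !mxE; apply: (Hdel i e) => //; by rewrite e0 edel.
have mnu1 : forall z', P z' -> dotv nu1 z' <= dotv nu1 z0.
  move=> z' hz'; rewrite !dotvDl !dotvZl.
  have := mnu z' hz'; have := wmax z' hz'; nra.
have mnu2 : forall z', P z' -> dotv nu2 z' <= dotv nu2 z0.
  move=> z' /Pinv [x [y [hx hy ->]]]; rewrite dotP dz0 cf_linB.
  have := hy nu2 N2; have := HL e; rewrite e0 eeL => /(_ isT x ((XE x).1 hx)).
  rewrite (dotvC nu2 y); lra.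
apply: nodec; exists nu1, nu2, (1/2); split.
- by [].
- move=> [c [h|h]].
    have E i : (1 - c) * nu 0 i = (- (1 + c) * e) * w 0 i.
      by have := congr1 (fun v : 'rV[R]_m => v 0 i) h; rewrite /nu1 /nu2 !mxE => h'; lra.
    case: (eqVneq (1 + c) 0) => [c1|c1].
      apply: nuz => i; have := E i; have -> : c = -1 by lra.
      lra.
    apply: (noprop _ (prop_helper E _)).
    by rewrite mulf_neq0 ?oppr_eq0 // gt_eqF.
  have E i : (1 - c) * nu 0 i = ((1 + c) * e) * w 0 i.
    by have := congr1 (fun v : 'rV[R]_m => v 0 i) h; rewrite /nu1 /nu2 !mxE => h'; lra.
  case: (eqVneq (1 + c) 0) => [c1|c1].
    apply: nuz => i; have := E i; have -> : c = -1 by lra.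
    lra.
  apply: (noprop _ (prop_helper E _)).
  by rewrite mulf_neq0 // gt_eqF.
- by apply/andP; split; lra.
- by apply/rowP => i; rewrite /nu1 /nu2 !mxE; lra.
exists (dotv nu1 z0), (dotv nu2 z0 - dotv nu1 z0) => t /andP[t0 t1].
set v := nu1 + t *: (nu2 - nu1).
have Nv : NB v.
  have -> : v = (1 - t) *: nu1 + t *: nu2.
    by apply/rowP => i; rewrite /v !mxE; ring.
  by apply: Nb_comb => //; rewrite subr_ge0.
have mv : forall z', P z' -> dotv v z' <= dotv v z0.
  move=> z' hz'; rewrite /v dotvDl dotvZl dotvBl [dotv (_ + _) z0]dotvDl dotvZl dotvBl.
  have := mnu1 z' hz'; have := mnu2 z' hz'; nra.
rewrite -SP // (sf_max Pz0 mv); congr EFin.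
by rewrite /v dotvDl dotvZl dotvBl.
Qed.

Lemma fan_circ nu : NB nu -> nu != 0 -> outer_normal_fan P (cone1 nu) ->
  X_circuit X a beta nu.
Proof.
move=> Nn n0 [F [[w0 HF] Hc]].
have [z0 Fz0] : exists z0, F z0.
  apply: contrapT => hne.
  have : cone1 nu (- nu).
    by rewrite Hc => z Fz; exfalso; apply: hne; exists z.
  case=> t /= t0 h.
  have : (t + 1) *: nu = 0 by rewrite scalerDl scale1r h addNr.
  move/eqP; rewrite scaler_eq0 (negbTE n0) orbF => /eqP; lra.
have PF z : F z -> P z by rewrite HF => -[].
have Pz0 := PF _ Fz0.
have hnu : normal_cone P F nu by rewrite -Hc; exists 1; [exact: ler01|exact: scale1r].
have Hnu := hnu z0 Fz0.
split => //.
  by rewrite -SP // -Hnu ltry.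
move=> [nu1 [nu2 [lam [[N1 N2] np /andP[l0 l1] hnu12 [c [dd hc]]]]]].
have g1 : supp_fun P nu1 = c%:E.
  rewrite SP //; have := hc 0; rewrite lexx ler01 scale0r addr0 mul0r addr0.
  by move=> ->.
have g2 : supp_fun P nu2 = (c + dd)%:E.
  rewrite SP //; have := hc 1; rewrite ler01 lexx scale1r mul1r addrC subrK.
  by move=> ->.
have gn : supp_fun P nu = (c + (1 - lam) * dd)%:E.
  rewrite SP //; have := hc (1 - lam); rewrite subr_ge0 gerBl ltW ?ltW //.
  have -> : nu1 + (1 - lam) *: (nu2 - nu1) = nu.
    by rewrite hnu12; apply/rowP => i; rewrite !mxE; ring.
  by move=> ->.
have key z : F z -> dotv z nu1 = c /\ dotv z nu2 = c + dd.
  move=> Fz; have Pz := PF _ Fz.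
  have := hnu z Fz; rewrite gn; case => hz.
  have := sf_ub nu1 Pz; rewrite g1 lee_fin => h1.
  have := sf_ub nu2 Pz; rewrite g2 lee_fin => h2.
  move: hz; rewrite hnu12 dotvDr !dotvZr !(dotvC z) => hz.
  split; nra.
have c1 : cone1 nu nu1.
  by rewrite Hc => z Fz; rewrite g1 (key z Fz).1.
have c2 : cone1 nu nu2.
  by rewrite Hc => z Fz; rewrite g2 (key z Fz).2.
case: c1 => t1 t10 e1; case: c2 => t2 t20 e2.
apply: np; case: (eqVneq t2 0) => [t2e|t2n].
  by exists 0; right; rewrite -e2 t2e !scale0r.
by exists (t1 / t2); left; rewrite -e1 -e2 scalerA mulfVK.
Qed.

Definition isMax nu x := forall x', inX C d x' -> dotv (cf nu) x' <= dotv (cf nu) x.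

Definition Data nu (JS : {set 'I_p} * {set 'I_m}) :=
  (forall x, inX C d x -> (isMax nu x <-> forall j, j \in JS.1 -> dotv (C j) x = d j))
  /\ JS.2 = [set i | nu 0 i == 0]%SET.

Lemma circ_data nu : X_circuit X a beta nu -> exists JS, Data nu JS.
Proof.
case=> Nn n0 fin _.
have [x1 hx1] := hX0.
have [M hM] := sf_bound hx1 fin.
have [x0 hx0 m1] := attain (ex_intro _ x1 ((XE x1).1 hx1))
   (fun x hx => hM x ((XE x).2 hx)).
have [lam [l0 lc lid]] := KKT hx0 m1.
exists ([set j | 0 < lam j]%SET, [set i | nu 0 i == 0]%SET); split => // x hx /=.
have hx0v : dotv (cf nu) x0 = \sum_j lam j * d j.
  rewrite lid; apply: eq_bigr => j _.
  case: (ltrP 0 (lam j)) => lj; first by rewrite lc.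
  have -> : lam j = 0 by apply/eqP; rewrite eq_le lj l0.
  by rewrite !mul0r.
have diff : dotv (cf nu) x0 - dotv (cf nu) x = \sum_j lam j * (d j - dotv (C j) x).
  by rewrite hx0v lid -sumrB; apply: eq_bigr => j _; rewrite mulrBr.
have tge j : 0 <= lam j * (d j - dotv (C j) x) by rewrite mulr_ge0 // subr_ge0.
split.
  move=> hm j; rewrite inE => lj.
  have := hm x0 hx0; have := m1 x hx => h1 h2.
  have s0 : \sum_j lam j * (d j - dotv (C j) x) = 0 by rewrite -diff; lra.
  have := @psumr_eq0P _ _ predT _ (fun j _ => tge j) s0 j isT.
  move/eqP; rewrite mulf_eq0 gt_eqF //= subr_eq0 => /eqP ->//.
move=> hJ x' hx'.
have : \sum_j lam j * (d j - dotv (C j) x) = 0.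
  apply: big1 => j _; case: (ltrP 0 (lam j)) => lj.
    by rewrite hJ ?inE // subrr mulr0.
  have -> : lam j = 0 by apply/eqP; rewrite eq_le lj l0.
  by rewrite mul0r.
rewrite -diff => h; have := m1 x' hx'; lra.
Qed.

Lemma circ_uniq nu nu' JS : X_circuit X a beta nu -> X_circuit X a beta nu' ->
  nu 0 beta = -1 -> nu' 0 beta = -1 -> Data nu JS -> Data nu' JS -> nu' = nu.
Proof.
move=> cn cn' b1 b2 [d1 s1] [d2 s2].
have Nn : NB nu by case: cn.
have Nn' : NB nu' by case: cn'.
have : cone1 nu nu'.
  rewrite -(circ_cone cn) => z [Pz zmax].
  have [x [y [hx hy ez]]] := Pinv Pz.
  have hyn : dotv nu y <= 0 by rewrite dotvC; exact: hy.
  have mx : isMax nu x.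
    move=> x' hx'; have := zmax _ (Pmem0 ((XE x').2 hx')).
    by rewrite ez dotP dotAT; lra.
  have y0 : dotv nu y = 0.
    have := zmax _ (Pmem0 hx); rewrite ez dotP dotAT; lra.
  have mx' : isMax nu' x by apply/(d2 x ((XE x).1 hx))/(d1 x ((XE x).1 hx)).
  have y0' : dotv nu' y = 0.
    rewrite dotvC; apply: (zero_pattern hy Nn Nn'.2) => [i ni|]; last by rewrite dotvC.
    have : i \in JS.2 by rewrite s1 inE ni.
    by rewrite s2 inE => /eqP.
  have mz : forall z', P z' -> dotv nu' z' <= dotv nu' z.
    move=> z' /Pinv [x2 [y2 [hx2 hy2 ->]]].
    rewrite ez !dotP y0' addr0.
    have := hy2 nu' Nn'; have := mx' x2 ((XE x2).1 hx2); rewrite (dotvC y2); lra.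
  by rewrite (sf_max Pz mz) dotvC.
case=> t _ e.
have : t * nu 0 beta = nu' 0 beta by rewrite -e mxE.
rewrite b1 b2 => h; have t1 : t = 1 by lra.
by rewrite -e t1 scale1r.
Qed.

Lemma finite_circ :
  finite_set [set l : 'rV[R]_m | X_circuit X a beta l /\ l 0 beta = -1].
Proof.
set A := [set l : 'rV[R]_m | X_circuit X a beta l /\ l 0 beta = -1].
pose h := fun JS : ({set 'I_p} * {set 'I_m})%type =>
  xget 0 [set l | A l /\ Data l JS].
apply: (@sub_finite_set _ _ [set h JS | JS in setT]); last first.
  exact: finite_image finite_finset.
move=> l [cl lb]; have [JS hd] := circ_data cl.
exists JS => //.
have := @xgetI _ 0 [set l | A l /\ Data l JS] l (conj (conj cl lb) hd).
move=> [[cl' lb'] hd'].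
exact: circ_uniq cl cl' lb lb' hd hd'.
Qed.

End Main.

Unset Implicit Arguments.

Theorem theorem3p7 (R : realType) (n m : nat) (a : 'I_m -> 'rV[R]_n)
  (X : set 'rV[R]_n) (beta : 'I_m) :
  injective a ->
  X !=set0 ->
  is_polyhedron X ->
  (forall nu : 'rV[R]_m, Nbeta beta nu -> nu != 0 ->
     (X_circuit X a beta nu <->
      (outer_normal_fan (Pset X a beta) (cone1 nu)))) /\
  finite_set [set lam : 'rV[R]_m | X_circuit X a beta lam /\ lam 0 beta = -1].
Proof.
move=> _ hX0 [p [C [d HX]]]; split.
  move=> nu Nn n0; split.
    move=> hc; eexists; split; first by exists nu.
    by rewrite -(circ_cone HX hX0 hc).
  exact: fan_circ Nn n0.
exact: finite_circ HX hX0.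
Qed.
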